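(* Let $\Phi=(G,\varphi)$ be a complex unit gain graph of order $n$. Then $$r(G)-2\theta(G)\leq r(\Phi)\leq r(G)+2\theta(G).$$
   Context: A complex unit gain graph ($\mathbb{T}$-gain graph) $\Phi=(G,\varphi)$ consists of a finite simple graph $G$ (the underlying graph) with vertex set $\{v_1,\dots,v_n\}$ and a gain function $\varphi$ assigning to each oriented edge $e_{ij}$ (from $v_i$ to $v_j$, where $v_iv_j\in E(G)$) a complex number $\varphi(e_{ij})$ of modulus $1$, with $\varphi(e_{ji})=\varphi(e_{ij})^{-1}=\overline{\varphi(e_{ij})}$. The adjacency matrix $A(\Phi)$ is the $n\times n$ Hermitian matrix whose $(i,j)$ entry is $\varphi(e_{ij})$ if $v_iv_j\in E(G)$ and $0$ otherwise; $r(\Phi)$ denotes the rank of $A(\Phi)$. $r(G)$ denotes the rank of the ($0$-$1$) adjacency matrix of $G$. $\theta(G)=|E(G)|-|V(G)|+\omega(G)$ is the dimension of the cycle space of $G$, where $\omega(G)$ is the number of connected components of $G$. *)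

(* Defs.v *)
From mathcomp Require Import all_boot all_algebra.
From mathcomp Require Import complex reals.
Set Implicit Arguments. Unset Strict Implicit. Unset Printing Implicit Defensive.
Import GRing.Theory Num.Theory.
Local Open Scope ring_scope.
Local Open Scope complex_scope.

Definition simple_graph (n : nat) (adj : rel 'I_n) : Prop :=
  (forall i j, adj i j = adj j i) /\ (forall i, ~~ adj i i).

(* phi i j is the gain of the oriented edge e_ij (only meaningful when
   adj i j); gains have modulus 1 and phi(e_ji) = phi(e_ij)^-1 = conj. *)
Definition unit_gain (R : realType) (n : nat) (adj : rel 'I_n)
  (phi : 'I_n -> 'I_n -> R[i]) : Prop :=
  forall i j, adj i j -> `|phi i j| = 1 /\ phi j i = (phi i j)^-1.

Definition gain_adj (R : realType) (n : nat) (adj : rel 'I_n)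
  (phi : 'I_n -> 'I_n -> R[i]) : 'M[R[i]]_n :=
  \matrix_(i, j) (if adj i j then phi i j else 0).

Definition adj01 (F : nzRingType) (n : nat) (adj : rel 'I_n) : 'M[F]_n :=
  \matrix_(i, j) (if adj i j then 1 else 0).

Definition nedges (n : nat) (adj : rel 'I_n) : nat :=
  #|[set p : 'I_n * 'I_n | adj p.1 p.2 && (p.1 < p.2)%N]|.

Definition ncomp (n : nat) (adj : rel 'I_n) : nat :=
  n_comp (connect adj) 'I_n.

Definition theta (n : nat) (adj : rel 'I_n) : int :=
  (nedges adj)%:Z - n%:Z + (ncomp adj)%:Z.

(* Main.v *)
Require Import Defs.
From mathcomp Require Import all_boot all_algebra.
Import mathcomp.order.order.Order.TTheory.
From mathcomp Require Import complex reals.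
From mathcomp Require Import zify ring lra.
Import GRing.Theory Num.Theory.
Local Open Scope ring_scope.
Set Implicit Arguments. Unset Strict Implicit.

Section Comb.
Variable n : nat.
Implicit Types e f : rel 'I_n.

Definition rem_edge e (u v : 'I_n) : rel 'I_n :=
  fun x y => e x y && ~~ (((x == u) && (y == v)) || ((x == v) && (y == u))).
Definition rem_vtx e (u : 'I_n) : rel 'I_n :=
  fun x y => [&& e x y, x != u & y != u].
Definition npairs e := #|[set p : 'I_n * 'I_n | e p.1 p.2]|.

Lemma connect_idem e : connect (connect e) =2 connect e.
Proof.
move=> x y; apply/idP/idP.
  by apply: connect_sub => a b h.
by apply: connect_sub => a b h; apply: connect1; apply: connect1.
Qed.

Lemma ncompE e : ncomp e = n_comp e 'I_n.
Proof. by rewrite /ncomp; apply: eq_n_comp; apply: connect_idem. Qed.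

Lemma rem_edge_sym e u v : symmetric e -> symmetric (rem_edge e u v).
Proof.
move=> se x y; rewrite /rem_edge se.
by case: (x == u); case: (y == v); case: (x == v); case: (y == u); rewrite ?orbT ?orbF.
Qed.

Lemma ncomp_rem_edge e u v : symmetric e ->
  (n_comp (rem_edge e u v) 'I_n <= n_comp e 'I_n + 1)%N.
Proof.
move=> se; set f := rem_edge e u v.
have sf : symmetric f by apply: rem_edge_sym.
have cf := sym_connect_sym sf; have ce := sym_connect_sym se.
pose K w := connect f w u || connect f w v.
have Kt : forall a b, connect f a b -> K b -> K a.
  by move=> a b ab /orP [] h; rewrite /K (connect_trans ab h) ?orbT.
have key : forall a b, connect e a b -> connect f a b || (K a && K b).
  move=> a b /connectP [p pp ->]; elim: p a pp => [|c p IH] a /=.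
    by rewrite connect0.
  case/andP => eac /IH {IH} H.
  have h1 : connect f a c || (K a && K c).
    case fac: (f a c); first by rewrite connect1.
    move: fac; rewrite /f /rem_edge eac /= => /negbFE /orP [] /andP [/eqP -> /eqP ->];
      by rewrite /K !connect0 ?orbT.
  case/orP: h1 => [h1 | /andP [Ka Kc]]; case/orP: H => [H | /andP [Kc2 KL]].
  - by rewrite (connect_trans h1 H).
  - by rewrite (Kt _ _ h1 Kc2) KL orbT.
  - by rewrite Ka (Kt _ c _ Kc) ?orbT // cf.
  - by rewrite Ka KL orbT.
pose A := [set r | roots f r].
have -> : n_comp f 'I_n = #|A|.
  by apply: eq_card => x; rewrite !inE andbT.
have -> : n_comp e 'I_n = #|[set r | roots e r]|.
  by apply: eq_card => x; rewrite !inE andbT.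
pose z := fingraph.root f v.
rewrite (cardsD1 z A) addnC; apply: leq_add; last exact: leq_b1.
rewrite -(card_in_imset (f := fingraph.root e)).
  apply: subset_leq_card; apply/subsetP => r /imsetP [x _ ->].
  by rewrite inE roots_root.
move=> r1 r2; rewrite !inE => /andP [r1z r1A] /andP [r2z r2A] /eqP.
rewrite (root_connect ce) => /key /orP [].
  by rewrite -(root_connect cf) (eqP r1A) (eqP r2A) => /eqP.
have Kr : forall r, r != z -> roots f r -> K r -> connect f r u.
  move=> r rz rA /orP [] // rv.
  by move: rz; rewrite /z -(fingraph.rootP cf rv) (eqP rA) eqxx.
case/andP => /(Kr _ r1z r1A) h1 /(Kr _ r2z r2A) h2.
have : connect f r1 r2 by rewrite (connect_trans h1) // cf.
by rewrite -(root_connect cf) (eqP r1A) (eqP r2A) => /eqP.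
Qed.


Lemma ncomp_rem_edge_cyc e u v : symmetric e ->
  connect (rem_edge e u v) u v -> n_comp (rem_edge e u v) 'I_n = n_comp e 'I_n.
Proof.
move=> se cuv; set f := rem_edge e u v.
have cf := sym_connect_sym (rem_edge_sym u v se).
apply: eq_n_comp => x y; apply/idP/idP.
  by apply: connect_sub => a b /andP [h _]; apply: connect1.
apply: connect_sub => a b eab.
case fab: (f a b); first by rewrite connect1.
move: fab; rewrite /f /rem_edge eab /= => /negbFE /orP [] /andP [/eqP -> /eqP ->] //.
by rewrite cf.
Qed.

Lemma nedges_rem e u v : symmetric e -> e u v -> u != v ->
  nedges e = (nedges (rem_edge e u v)).+1.
Proof.
move=> se euv nuv; rewrite /nedges.
pose w := if (u < v)%N then (u, v) else (v, u).
have wS : w \in [set p : 'I_n * 'I_n | e p.1 p.2 && (p.1 < p.2)%N].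
  rewrite inE /w; case: ltnP => h /=; first by rewrite euv.
  rewrite -se euv /= ltn_neqAle h andbT.
  by rewrite eq_sym.
rewrite (cardsD1 w) wS add1n; congr (_.+1); apply: eq_card => [[x y]].
rewrite !inE /= /rem_edge /w.
case exy: (e x y); last by rewrite /= andbF.
case xy: (x < y)%N; last by rewrite /= !andbF.
rewrite /= !andbT.
have nuv' : (val u != val v) by [].
move: xy nuv'; case: (ltnP u v) => h; rewrite xpair_eqE -!val_eqE /= => xy nuv';
  apply/idP/idP => H; lia.
Qed.


Lemma theta_ext e e' : e =2 e' -> theta e = theta e'.
Proof.
move=> ee; rewrite /theta !ncompE.
have -> : nedges e = nedges e' by apply: eq_card => p; rewrite !inE ee.
by rewrite (eq_n_comp (eq_connect ee)).
Qed.

Lemma neq_of_edge e u v : (forall x, ~~ e x x) -> e u v -> u != v.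
Proof. by move=> ie euv; apply: contraTneq euv => ->; apply: ie. Qed.

Lemma theta_rem e u v : symmetric e -> (forall x, ~~ e x x) -> e u v ->
  theta (rem_edge e u v) <= theta e.
Proof.
move=> se ie euv; rewrite /theta !ncompE (nedges_rem se euv (neq_of_edge ie euv)).
have := ncomp_rem_edge u v se; lia.
Qed.

Lemma theta_rem_cyc e u v : symmetric e -> (forall x, ~~ e x x) -> e u v ->
  connect (rem_edge e u v) u v -> theta (rem_edge e u v) + 1 <= theta e.
Proof.
move=> se ie euv cuv.
rewrite /theta !ncompE (nedges_rem se euv (neq_of_edge ie euv)).
rewrite (ncomp_rem_edge_cyc se cuv); lia.
Qed.

Lemma npairs_rem e u v : e u v -> (npairs (rem_edge e u v) < npairs e)%N.
Proof.
move=> euv; apply: proper_card; apply/properP; split.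
  by apply/subsetP => p; rewrite !inE => /andP [].
by exists (u, v); rewrite !inE /= /rem_edge ?euv // !eqxx.
Qed.

Lemma npairs_vtx e u v : e u v -> (npairs (rem_vtx e u) < npairs e)%N.
Proof.
move=> euv; apply: proper_card; apply/properP; split.
  by apply/subsetP => p; rewrite !inE => /andP [].
by exists (u, v); rewrite !inE /= /rem_vtx ?euv // !eqxx /= ?andbF.
Qed.

Lemma theta_mono e e' : symmetric e -> (forall x, ~~ e x x) -> symmetric e' ->
  (forall x y, e' x y -> e x y) -> theta e' <= theta e.
Proof.
move=> + + se'.
move=> se ie sub.
have : exists k, (npairs e < k)%N.
  exists (npairs e).+1; exact: (ltnSn (npairs e)).
case=> k lt.
elim: k e lt se ie sub => [|k IH] e lt se ie sub; first (rewrite ltn0 in lt; discriminate lt).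
case: (pickP [pred p : 'I_n * 'I_n | e p.1 p.2 && ~~ e' p.1 p.2]) =>
  [[u v] /= /andP [euv ne'uv] | none].
  apply: le_trans (theta_rem se ie euv); apply: IH.
  - exact: leq_trans (npairs_rem euv) lt.
  - exact: rem_edge_sym.
  - by move=> x; rewrite /rem_edge (negbTE (ie x)).
  move=> x y h; rewrite /rem_edge (sub _ _ h) /=; apply/negP => /orP [] /andP [/eqP xu /eqP yv].
    by move: h; rewrite xu yv (negbTE ne'uv).
  by move: h; rewrite xu yv se' (negbTE ne'uv).
have ee : e =2 e'.
  move=> x y; have := none (x, y); rewrite /= => /negbT.
  by case exy: (e x y) => //=; [rewrite negbK | move=> _; apply/esym/negP => /sub; rewrite exy].
by rewrite (theta_ext ee).
Qed.

Lemma theta0 : theta (fun _ _ : 'I_n => false) = 0.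
Proof.
have r : forall x, fingraph.root (fun _ _ : 'I_n => false) x = x.
  move=> x; rewrite /fingraph.root; case: pickP => [y /connectP [[|c p] //= _ ->]|] //.
have N0 : nedges (fun _ _ : 'I_n => false) = 0%N.
  by apply/eqP; rewrite cards_eq0; apply/eqP/setP => p; rewrite !inE.
have C : ncomp (fun _ _ : 'I_n => false) = n.
  rewrite ncompE -[RHS]card_ord; apply: eq_card => x.
  by rewrite !inE /roots r eqxx.
rewrite /theta N0 C; lia.
Qed.

Lemma theta_ge0 e : symmetric e -> (forall x, ~~ e x x) -> 0 <= theta e.
Proof.
move=> se ie; rewrite -theta0; apply: theta_mono => //.
Qed.

End Comb.

Lemma connect_mono (T : finType) (e1 e2 : rel T) :
  subrel e1 e2 -> subrel (connect e1) (connect e2).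
Proof. by move=> s; apply: connect_sub => a b h; apply: connect1; apply: s. Qed.

Section Mat.
Variables (R : realType) (n : nat).
Implicit Types e f : rel 'I_n.

Definition gainok e (phi : 'I_n -> 'I_n -> R[i]) :=
  forall i j, e i j -> phi i j != 0 /\ phi j i = (phi i j)^-1.

Lemma rank_switch e (phi psi : 'I_n -> 'I_n -> R[i]) (d : 'I_n -> R[i]) :
  (forall i j, e i j -> psi i j = (d i)^-1 * phi i j * d j) ->
  (\rank (gain_adj e psi) <= \rank (gain_adj e phi))%N.
Proof.
move=> H.
have -> : gain_adj e psi =
    diag_mx (\row_i (d i)^-1) *m gain_adj e phi *m diag_mx (\row_i d i).
  apply/matrixP => i j; rewrite mul_diag_mx mul_mx_diag !mxE.
  case eij: (e i j); first by rewrite H.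
  by rewrite mulr0 mul0r.
apply: leq_trans (mxrankM_maxl _ _) _; exact: mxrankM_maxr.
Qed.

Definition Pu (u : 'I_n) : 'M[R[i]]_n := diag_mx (\row_i ((i != u)%:R)).

Lemma rank_cut (A : 'M[R[i]]_n) u :
  (\rank A <= \rank (Pu u *m A *m Pu u) + 2)%N.
Proof.
pose Q : 'M[R[i]]_n := diag_mx (\row_i ((i == u)%:R)).
have E : A = Pu u *m A *m Pu u + Q *m A + Pu u *m A *m Q.
  apply/matrixP => i j; rewrite /Pu /Q !mul_mx_diag !mul_diag_mx !mxE.
  have [->|iu] := eqVneq i u; have [->|ju] := eqVneq j u;
    rewrite ?eqxx ?(negbTE iu) ?(negbTE ju) /=;
    rewrite ?mul1r ?mulr1 ?mul0r ?mulr0 ?addr0 ?add0r //.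
have QE : Q = delta_mx u u.
  apply/matrixP => i j; rewrite !mxE.
  have [->|iu] := eqVneq i u; first by rewrite /= eq_sym.
  by rewrite /= mul0rn.
have hY : (\rank (Q *m A) <= 1)%N.
  by apply: leq_trans (mxrankM_maxl _ _) _; rewrite QE mxrank_delta.
have hZ : (\rank (Pu u *m A *m Q) <= 1)%N.
  by apply: leq_trans (mxrankM_maxr _ _) _; rewrite QE mxrank_delta.
rewrite {1}E.
apply: leq_trans (mxrank_add _ _) _.
apply: leq_trans (leq_add (mxrank_add _ _) hZ) _.
rewrite -addnA leq_add2l; exact: (leq_add hY (leqnn 1)).
Qed.

Lemma gain_adj_vtx e (phi : 'I_n -> 'I_n -> R[i]) u :
  gain_adj (rem_vtx e u) phi = Pu u *m gain_adj e phi *m Pu u.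
Proof.
apply/matrixP => i j; rewrite /Pu mul_diag_mx mul_mx_diag !mxE /rem_vtx.
have [->|iu] := eqVneq i u; have [->|ju] := eqVneq j u;
  rewrite ?eqxx ?(negbTE iu) ?(negbTE ju) /= ?andbF ?andbT;
  rewrite ?mul1r ?mulr1 ?mul0r ?mulr0 //.

Qed.


Lemma forest_switch e (phi psi : 'I_n -> 'I_n -> R[i]) :
  symmetric e -> (forall x, ~~ e x x) ->
  (forall u v, e u v -> ~~ connect (rem_edge e u v) u v) ->
  gainok e phi -> gainok e psi ->
  exists d : 'I_n -> R[i], (forall i, d i != 0) /\
    (forall i j, e i j -> psi i j = (d i)^-1 * phi i j * d j).
Proof.
move=> se ie fe gp gq.
have : exists k, (npairs e < k)%N.
  exists (npairs e).+1; exact: (ltnSn (npairs e)).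
case=> k lt.
elim: k e lt se ie fe gp gq => [|k IH] e lt se ie fe gp gq;
  first (rewrite ltn0 in lt; discriminate lt).
case: (pickP [pred p : 'I_n * 'I_n | e p.1 p.2]) => [[u v] /= euv | none]; last first.
  exists (fun _ => 1); split; first by move=> i; rewrite oner_eq0.
  by move=> i j eij; have := none (i, j); rewrite /= eij.
set f := rem_edge e u v.
have sf : symmetric f by apply: rem_edge_sym.
have cf := sym_connect_sym sf.
have [d' [d'nz Hd']] : exists d : 'I_n -> R[i], (forall i, d i != 0) /\
    (forall i j, f i j -> psi i j = (d i)^-1 * phi i j * d j).
  apply: IH => //.
  - exact: leq_trans (npairs_rem euv) lt.
  - by move=> x; rewrite /f /rem_edge (negbTE (ie x)).
  - move=> x y fxy; apply: contra (fe x y (andP fxy).1).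
    apply: connect_mono => a b /andP [/andP [eab _] nab].
    by rewrite /rem_edge eab nab.
  - by move=> x y /andP [exy _]; apply: gp.
  - by move=> x y /andP [exy _]; apply: gq.
have nuv : ~~ connect f u v by apply: fe.
have nvu : ~~ connect f v u by rewrite cf.
have [pnz pinv] := gp u v euv.
have [qnz qinv] := gq u v euv.
pose c := psi u v * d' u / (phi u v * d' v).
have cnz : c != 0.
  by rewrite /c mulf_neq0 ?invr_neq0 ?mulf_neq0 ?d'nz.
exists (fun w => if connect f v w then c * d' w else d' w); split.
  move=> w; case: ifP => _; [exact: mulf_neq0 cnz (d'nz w) | exact: d'nz].
move=> i j eij.
case fij: (f i j).
  have Hc := same_connect1r cf fij v; rewrite /= in Hc.
  rewrite -Hc; case: ifP => _; rewrite (Hd' i j fij) //.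
  rewrite invfM; field.
  by rewrite cnz d'nz.
move: fij; rewrite /f /rem_edge eij /= => /negbFE /orP [] /andP [/eqP -> /eqP ->].
  rewrite (negbTE nvu) connect0 /c; field.
  by rewrite pnz !d'nz.
rewrite (negbTE nvu) connect0 /c pinv qinv; field.
by rewrite pnz qnz !d'nz.
Qed.


Lemma main_ineq e (phi psi : 'I_n -> 'I_n -> R[i]) :
  symmetric e -> (forall x, ~~ e x x) -> gainok e phi -> gainok e psi ->
  (\rank (gain_adj e phi))%:Z <= (\rank (gain_adj e psi))%:Z + 2 * theta e.
Proof.
move=> se ie gp gq.
have : exists k, (npairs e < k)%N.
  exists (npairs e).+1; exact: (ltnSn (npairs e)).
case=> k lt.
elim: k e lt se ie gp gq => [|k IH] e lt se ie gp gq;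
  first (rewrite ltn0 in lt; discriminate lt).
case: (pickP [pred p : 'I_n * 'I_n | e p.1 p.2 && connect (rem_edge e p.1 p.2) p.1 p.2])
  => [[u v] /= /andP [euv cuv] | none].
  set g := rem_vtx e u.
  have IHg := IH g (leq_trans (npairs_vtx euv) lt).
  have sg : symmetric g.
    by move=> x y; rewrite /g /rem_vtx se; case: (x != u); case: (y != u); rewrite ?andbF ?andbT.
  have ig : forall x, ~~ g x x by move=> x; rewrite /g /rem_vtx (negbTE (ie x)).
  have subg : forall x y, g x y -> e x y by move=> x y /andP [].
  have := IHg sg ig (fun x y h => gp x y (subg x y h)) (fun x y h => gq x y (subg x y h)).
  have h1 := rank_cut (gain_adj e phi) u; rewrite -gain_adj_vtx in h1.
  have h2 : (\rank (gain_adj g psi) <= \rank (gain_adj e psi))%N.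
    rewrite /g gain_adj_vtx.
    apply: leq_trans (mxrankM_maxl _ _) _; exact: mxrankM_maxr.
  have t1 : theta g <= theta (rem_edge e u v).
    apply: theta_mono => //.
    - exact: rem_edge_sym.
    - by move=> x; rewrite /rem_edge (negbTE (ie x)).
    - move=> x y /and3P [exy xu yu]; rewrite /rem_edge exy /=.
      by rewrite (negbTE xu) (negbTE yu) andbF.
  have t2 := theta_rem_cyc se ie euv cuv.
  move: h1 h2; rewrite /g.
  set a := \rank (gain_adj e phi); set b := \rank (gain_adj (rem_vtx e u) phi).
  set c := \rank (gain_adj (rem_vtx e u) psi); set d := \rank (gain_adj e psi).
  move: t1 t2; rewrite /g.
  set t := theta (rem_vtx e u); set t' := theta (rem_edge e u v); set t'' := theta e.
  lia.
have fe : forall u v, e u v -> ~~ connect (rem_edge e u v) u v.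
  by move=> u v euv; have := none (u, v); rewrite /= euv /= => ->.
have [d [dnz Hd]] := forest_switch se ie fe gp gq.
have r1 : (\rank (gain_adj e phi) <= \rank (gain_adj e psi))%N.
  apply: (rank_switch (d := fun i => (d i)^-1)) => i j eij.
  rewrite (Hd i j eij) invrK; field.
  by rewrite !dnz.
have t0 := theta_ge0 se ie.
move: r1 t0.
set a := \rank (gain_adj e phi); set b := \rank (gain_adj e psi).
set t := theta e.
lia.
Qed.

End Mat.

Unset Implicit Arguments.

Theorem theorem3p2 (R : realType) (n : nat) (adj : rel 'I_n)
  (phi : 'I_n -> 'I_n -> R[i]) :
  simple_graph adj -> unit_gain adj phi ->
  let rG : int := (\rank (adj01 R[i] adj))%:Z in
  let rPhi : int := (\rank (gain_adj adj phi))%:Z in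
  rG - 2 * theta adj <= rPhi /\ rPhi <= rG + 2 * theta adj.
Proof.
move=> [se ie] ug rG rPhi.
have gp : gainok adj phi.
  move=> i j eij; have [h1 h2] := ug i j eij; split => //.
  by apply/eqP => h0; move: h1; rewrite h0 normr0 => /esym/eqP; rewrite oner_eq0.
have gq : gainok adj (fun _ _ : 'I_n => (1 : R[i])).
  by move=> i j _; rewrite invr1 oner_eq0.
have E : adj01 R[i] adj = gain_adj adj (fun _ _ => 1).
  by apply/matrixP => i j; rewrite !mxE.
have h1 := main_ineq se ie gp gq.
have h2 := main_ineq se ie gq gp.
rewrite /rG /rPhi E; move: h1 h2.
set a := \rank (gain_adj adj phi); set b := \rank (gain_adj adj (fun _ _ => 1)).
set t := theta adj.
lia.
Qed.
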